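(* Let $\mathcal{J}=\langle U,g,f\rangle$ satisfy the standing assumptions below, and let $(\theta^k)_{k\ge1}$ be a sequence of evaluations satisfying the long-term condition. Then for all $T_0\geq0$ and all $y_0\in\mathbb{R}^d$, $$\limsup_k V_{\theta^k}(y_0)=\limsup_k\inf_{t\leq T_0}V_{\mathcal{T}_t\sharp\theta^k}(y_0).$$ In particular, for all $T_0\ge0$ and $y_0\in\mathbb{R}^d$, $\limsup_k V_{\theta^k}(y_0)\leq\sup_{k\in\mathbb{N}^*}\inf_{t\leq T_0}V_{\mathcal{T}_t\sharp\theta^k}(y_0)$.
   Context: Setting: $U$ is a metric space, $g:\mathbb{R}^d\times U\to[0,1]$ is Borel measurable, $f:\mathbb{R}^d\times U\to\mathbb{R}^d$ is Borel measurable with $\|f(y,u)-f(\bar y,u)\|\leq L\|y-\bar y\|$ and $\|f(y,u)\|\leq a(1+\|y\|)$ for constants $L\ge0,a>0$. $\mathcal{U}$ is the set of measurable controls $u:[0,+\infty)\to U$; $y(t,u,y_0)$ is the solution of $y'=f(y,u)$, $y(0)=y_0$. For an evaluation $\theta\in\Delta(\mathbb{R}_+)$, $V_\theta(y_0)=\inf_{u\in\mathcal{U}}\int_{[0,+\infty)} g(y(s,u,y_0),u(s))\,d\theta(s)$ and $V_{\mathcal{T}_t\sharp\theta}(y_0)=\inf_{u\in\mathcal{U}}\int_{[0,+\infty)} g(y(s+t,u,y_0),u(s+t))\,d\theta(s)$ ($t$ ranging over $[0,T_0]$). $TV_s(\theta)=\sup_{Q\in\mathcal{B}(\mathbb{R}_+)}|\theta(Q)-\theta(Q+s)|$;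 $(\theta^k)$ satisfies the long-term condition if $\sup_{0\le s\le S}TV_s(\theta^k)\to0$ as $k\to\infty$ for every $S>0$. *)

(* Defs.v *)
From HB Require Import structures.
From mathcomp Require Import all_boot all_order all_algebra.
From mathcomp Require Import all_classical all_reals all_analysis.
Set Implicit Arguments. Unset Strict Implicit. Unset Printing Implicit Defensive.
Import Order.TTheory GRing.Theory Num.Theory.
Import numFieldNormedType.Exports.
Local Open Scope classical_set_scope.
Local Open Scope ring_scope.

Definition borel_set {T : topologicalType} (A : set T) : Prop :=
  smallest (sigma_algebra setT) open A.

Definition Rplus {R : realType} : set R := [set x | 0 <= x].

Definition borel_measurable {X Y : topologicalType} (h : X -> Y) : Prop :=
  forall B : set Y, borel_set B -> borel_set (h @^-1` B).

(* Measurable controls u : [0,+oo) -> U (values on negative times are irrelevant):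
   Borel measurable on [0,+oo). *)
Definition is_control {R : realType} {U : topologicalType} (u : R -> U) : Prop :=
  forall B : set U, borel_set B -> measurable (Rplus `&` u @^-1` B).

(* y is the (Caratheodory) solution of y' = f(y,u), y(0) = y0 on [0,+oo):
   y(t) = y0 + int_0^t f(y(s),u(s)) ds componentwise, with integrable integrand. *)
Definition is_solution {R : realType} {U : Type} {d : nat}
  (f : 'rV[R]_d -> U -> 'rV[R]_d) (u : R -> U) (y0 : 'rV[R]_d) (y : R -> 'rV[R]_d)
  : Prop :=
  forall t : R, 0 <= t -> forall i : 'I_d,
    (@lebesgue_measure R).-integrable [set s : R | (0 <= s <= t)%R]
       (fun s => (f (y s) (u s) ord0 i)%:E) /\
    (y t ord0 i)%:E = (y0 ord0 i)%:E +
       (\int[@lebesgue_measure R]_(s in [set s : R | (0 <= s <= t)%R])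
           (f (y s) (u s) ord0 i)%:E)%E.

Definition V_eval {R : realType} {U : topologicalType} {d : nat}
  (g : 'rV[R]_d -> U -> R) (f : 'rV[R]_d -> U -> 'rV[R]_d)
  (theta : probability R R) (y0 : 'rV[R]_d) : \bar R :=
  ereal_inf [set r | exists (u : R -> U) (y : R -> 'rV[R]_d),
     is_control u /\ is_solution f u y0 y /\
     r = (\int[theta]_(s in Rplus) (g (y s) (u s))%:E)%E].

(* V_{T_t # theta}(y0) = inf_u int g(y(s+t,u,y0),u(s+t)) dtheta(s) *)
Definition V_shift {R : realType} {U : topologicalType} {d : nat}
  (g : 'rV[R]_d -> U -> R) (f : 'rV[R]_d -> U -> 'rV[R]_d)
  (theta : probability R R) (t : R) (y0 : 'rV[R]_d) : \bar R :=
  ereal_inf [set r | exists (u : R -> U) (y : R -> 'rV[R]_d),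
     is_control u /\ is_solution f u y0 y /\
     r = (\int[theta]_(s in Rplus) (g (y (s + t)) (u (s + t)))%:E)%E].

Definition TV {R : realType} (theta : probability R R) (s : R) : \bar R :=
  ereal_sup [set `|(theta Q - theta [set (x + s)%R | x in Q])%E|%E
             | Q in [set Q : set R | measurable Q /\ Q `<=` Rplus]].

Definition long_term {R : realType} (theta : nat -> probability R R) : Prop :=
  forall S : R, 0 < S ->
    (fun k => ereal_sup [set TV (theta k) s | s in [set s | 0 <= s <= S]])
      @ \oo --> 0%E.

(* Main.v *)
Require Import Defs.
From HB Require Import structures.
From mathcomp Require Import all_boot all_order all_algebra.
From mathcomp Require Import all_classical all_reals all_analysis.
From mathcomp Require Import lra zify.
Import Order.TTheory GRing.Theory Num.Theory.
Import numFieldNormedType.Exports.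
Local Open Scope classical_set_scope.
Local Open Scope ring_scope.

Section Aux.
Context {R : realType}.

Lemma shift_cont (s : R) : continuous (fun x : R => x + s).
Proof. by move=> x; apply: cvgD; [exact: cvg_id|exact: cvg_cst]. Qed.

Lemma mpre_shift (s : R) {Q : set R} : measurable Q ->
  measurable ((fun x : R => x + s) @^-1` Q).
Proof.
move=> mQ; rewrite -[X in measurable X]setTI.
exact: (measurable_realfun.continuous_measurable_fun (shift_cont s)) measurableT Q mQ.
Qed.

Lemma img_shift (s : R) (Q : set R) :
  [set (x + s)%R | x in Q] = (fun x : R => x + (- s)) @^-1` Q.
Proof.
apply/seteqP; split => [_ [x Qx <-]|x Qx] /=; first by rewrite addrK.
by exists (x - s) => //; rewrite subrK.
Qed.

Lemma mimg_shift (s : R) {Q : set R} : measurable Q ->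
  measurable [set (x + s)%R | x in Q].
Proof. by move=> mQ; rewrite img_shift; exact: mpre_shift. Qed.

Local Open Scope ereal_scope.

Lemma tv_ub (th : probability R R) s Q : measurable Q -> Q `<=` Rplus ->
  `|th Q - th [set (x + s)%R | x in Q]| <= TV th s.
Proof. by move=> mQ QR; apply: ereal_sup_ubound; exists Q. Qed.

Lemma tv_ge0 (th : probability R R) s : 0 <= TV th s.
Proof.
apply: (@le_trans _ _ (`|th set0 - th [set (x + s)%R | x in set0]|)); last first.
  exact: (tv_ub th s set0 measurable0 (sub0set _)).
by rewrite image_set0 measure0 subee // abse0.

Qed.

Lemma finE {x : \bar R} : x \is a fin_num -> exists r : R, x = r%:E.
Proof. by move=> fx; exists (fine x); rewrite fineK. Qed.

Lemma tv_le1 (th : probability R R) s : TV th s <= 1.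
Proof.
apply: ge_ereal_sup => _ [Q [mQ QR] <-].
have mQ' := mimg_shift s mQ.
have h1 : th Q <= 1 := probability_le1 th mQ.
have h2 : th [set (x + s)%R | x in Q] <= 1 := probability_le1 th mQ'.
have h3 : 0 <= th Q := measure_ge0 th Q.
have h4 : 0 <= th [set (x + s)%R | x in Q] := measure_ge0 th _.
move: h1 h2 h3 h4.
have [a ->] := finE (fin_num_measure th Q mQ).
have [b ->] := finE (fin_num_measure th _ mQ').
rewrite -EFinB abse_EFin !lee_fin => h1 h2 h3 h4.
by rewrite ler_norml; apply/andP; split; lra.
Qed.

Lemma tv_fin (th : probability R R) s : TV th s \is a fin_num.
Proof.
rewrite ge0_fin_numE ?tv_ge0 //; apply: (@le_lt_trans _ _ 1) => //.
  exact: tv_le1.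
exact: ltey.
Qed.

Lemma mRplus : measurable (@Rplus R).
Proof. by rewrite /Rplus -set_itvcy; exact: measurable_itv. Qed.

Lemma stepB (th : probability R R) (t : R) (C : set R) : (0 <= t)%R ->
  measurable C -> C `<=` Rplus ->
  th C <= th [set s | 0 <= s /\ C (s + t)]%R + (TV th t + TV th t).
Proof.
move=> t0 mC CR.
pose Q := [set s | 0 <= s /\ C (s + t)]%R.
have mQ : measurable Q.
  have -> : Q = Rplus `&` (fun x : R => (x + t)%R) @^-1` C by [].
  exact: measurableI mRplus (mpre_shift t mC).
have QR : Q `<=` Rplus by move=> x [].
have mGe : measurable ((`[t, +oo[%classic : set R) : set R) by exact: measurable_itv.
have mLt : measurable ((`]-oo, t[%classic : set R) : set R) by exact: measurable_itv.
have QtE : [set (x + t)%R | x in Q] = C `&` (`[t, +oo[%classic : set R).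
  apply/seteqP; split => [_ [x [x0 Cx] <-]|x [Cx]].
    by split => //; rewrite /= in_itv /= andbT lerDr.
  rewrite /= in_itv /= andbT => tx; exists (x - t)%R; last by rewrite subrK.
  by split; [rewrite subr_ge0|rewrite subrK].
have RtE : [set (x + t)%R | x in Rplus] = (`[t, +oo[%classic : set R).
  apply/seteqP; split => [_ [x x0 <-]|x].
    by rewrite /= in_itv /= andbT lerDr.
  rewrite /= in_itv /= andbT => tx; exists (x - t)%R; last by rewrite subrK.
  by rewrite /Rplus /= subr_ge0.
have CE : C = (C `&` (`]-oo, t[%classic : set R)) `|` (C `&` (`[t, +oo[%classic : set R)).
  rewrite -setIUr; apply/seteqP; split => [x Cx|x [] //].
  split => //; rewrite /= !in_itv /= andbT.
  by case: (ltP x t) => _; [left|right].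
have RE : Rplus = (Rplus `&` (`]-oo, t[%classic : set R)) `|` (`[t, +oo[%classic : set R).
  apply/seteqP; split => [x x0|x].
    rewrite /= !in_itv /= andbT.
    by case: (ltP x t) => xt; [left|right].
  rewrite /= !in_itv /= andbT => -[[]//|tx].
  by rewrite /Rplus /=; apply: le_trans tx.
have disj (A : set R) : A `&` (`]-oo, t[%classic : set R) `&` (`[t, +oo[%classic : set R) = set0.
  apply/seteqP; split => [x [[_]] |x //].
  by rewrite /= !in_itv /= andbT => xt tx; move: (lt_le_trans xt tx); rewrite ltxx.
have eC : th C = th (C `&` (`]-oo, t[%classic : set R)) + th [set (x + t)%R | x in Q].
  rewrite QtE {1}CE measureU //; try exact: measurableI.
  by rewrite setIACA setIid setIA disj.
have eR : th Rplus = th (Rplus `&` (`]-oo, t[%classic : set R)) + th [set (x + t)%R | x in Rplus].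
  rewrite RtE {1}RE measureU //; first exact: measurableI mRplus mLt.
have lo : th (C `&` (`]-oo, t[%classic : set R)) <= th (Rplus `&` (`]-oo, t[%classic : set R)).
  apply: le_measure; rewrite ?inE; try exact: measurableI mRplus mLt.
    exact: measurableI.
  by apply: setSI.
have t1 := tv_ub th t Q mQ QR.
have t2 := tv_ub th t Rplus mRplus (@subset_refl _ _).
have mQt := mimg_shift t mQ; have mRt := mimg_shift t mRplus.
have mCL : measurable (C `&` (`]-oo, t[%classic : set R)) by exact: measurableI.
have mRL : measurable (Rplus `&` (`]-oo, t[%classic : set R)) by exact: measurableI mRplus mLt.
move: eC eR lo t1 t2.
have [c1 ->] := finE (fin_num_measure th _ mC).
have [c2 ->] := finE (fin_num_measure th _ mQ).
have [c3 ->] := finE (fin_num_measure th _ mQt).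
have [c4 ->] := finE (fin_num_measure th _ mRt).
have [c5 ->] := finE (fin_num_measure th _ mRplus).
have [c6 ->] := finE (fin_num_measure th _ mCL).
have [c7 ->] := finE (fin_num_measure th _ mRL).
have [c8 ->] := finE (tv_fin th t).
rewrite -!EFinB -!EFinD !abse_EFin !lee_fin => -[e1] [e2].
rewrite !ler_norml => l1 /andP[a1 b1] /andP[a2 b2].
lra.
Qed.

Local Close Scope ereal_scope.
Lemma count_lt (m N : nat) : \sum_(k < N) ((k < m)%N%:R : R) = (minn m N)%:R.
Proof.
elim: N => [|N IH]; first by rewrite big_ord0 minn0.
rewrite big_ord_recr /= IH -natrD; congr (_%:R).
by case: (ltnP N m) => h /=; lia.
Qed.

Lemma ind_count (N : nat) (v : R) : (0 < N)%N -> 0 <= v -> v <= 1 ->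
  \sum_(k < N) ((N%:R : R)^-1 * ((k.+1%:R / (N%:R : R) <= v)%R)%:R) =
  N%:R^-1 * (Num.truncn (N%:R * v))%:R.
Proof.
move=> N0 v0 v1; rewrite -mulr_sumr; congr (_ * _).
have Np : 0 < (N%:R : R) by rewrite ltr0n.
under eq_bigr => k _ do rewrite ler_pdivrMr // mulrC -truncn_gt_nat.
rewrite count_lt; congr (_%:R); apply/minn_idPl.
rewrite truncn_le_nat; apply: (le_lt_trans (y := N%:R)).
  by rewrite -[leRHS]mulr1 ler_wpM2l // ltW.
by rewrite ltr_nat.
Qed.

Lemma trunc_bounds (N : nat) (v : R) : (0 < N)%N -> 0 <= v ->
  N%:R^-1 * (Num.truncn (N%:R * v))%:R <= v /\ v <= N%:R^-1 + N%:R^-1 * (Num.truncn (N%:R * v))%:R.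
Proof.
move=> N0 v0; have Np : 0 < (N%:R : R) by rewrite ltr0n.
have /andP[a b] := truncn_itv (mulr_ge0 (ltW Np) v0).
split.
  by rewrite ler_pdivrMl.
rewrite -[X in X + _]mulr1 -mulrDr ler_pdivlMl // addrC natr1.
exact: ltW.
Qed.

Local Open Scope ereal_scope.
Lemma int_mono d (T : measurableType d) (mu : {measure set T -> \bar R})
  (D : set T) (f1 f2 : T -> \bar R) :
  (forall x, D x -> 0 <= f1 x) -> (forall x, D x -> f1 x <= f2 x) ->
  \int[mu]_(x in D) f1 x <= \int[mu]_(x in D) f2 x.
Proof.
move=> f10 f12.
have f20 : forall x, D x -> 0 <= f2 x.
  by move=> x Dx; apply: le_trans (f10 x Dx) (f12 x Dx).
rewrite (ge0_integralE _ f10) (ge0_integralE _ f20) /=.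
apply: ereal_sup_le => _ [h hle <-]; exists h => //= x.
apply: le_trans (hle x) _; rewrite /patch; case: ifP => // /[!inE] Dx.
exact: f12.
Qed.
Lemma int_sum_ind (th : probability R R) (D : set R) (mD : measurable D) (c : R)
  (c0 : (0 <= c)%R) (F : nat -> set R) (mF : forall k, measurable (F k)) N :
  \int[th]_(x in D) ((\sum_(k < N) c * \1_(F k) x)%R%:E) =
  ((\sum_(k < N) c * fine (th (F k `&` D)))%R)%:E.
Proof.
under eq_integral do rewrite -sumEFin.
rewrite (@ge0_integral_sum _ _ _ th D mD _ (fun (k : 'I_N) x => ((c * \1_(F k) x)%R%:E))).
- rewrite -sumEFin; apply: eq_bigr => k _.
  rewrite EFinM (@ge0_integralZl_EFin _ _ _ th D mD (fun x => (\1_(F k) x)%:E)) //.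
  + rewrite integral_indic // fineK //.
    exact: fin_num_measure (measurableI _ _ (mF k) mD).
  + by apply/measurable_realfun.measurable_EFinP; apply: measurable_realfun.measurable_indic; exact: mF.
- move=> k; apply/measurable_realfun.measurable_EFinP.
  apply: (@measurable_realfun.measurable_funM _ _ _ D (cst c) (\1_(F k))); first exact: measurable_cst.
  by apply: measurable_realfun.measurable_indic; exact: mF.
- by move=> k x _; rewrite lee_fin mulr_ge0.
Qed.

Lemma mem_setb (b : R -> bool) x : (x \in [set y | b y]) = b x.
Proof. by apply/idP/idP => [/set_mem|/mem_set]. Qed.

Lemma core (th : probability R R) (t : R) (phi : R -> R) :
  (0 <= t)%R -> measurable_fun setT phi ->
  (forall x, 0 <= phi x <= 1)%R -> (forall x, ~ Rplus x -> phi x = 0%R) ->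
  \int[th]_(x in setT) (phi x)%:E <=
  \int[th]_(x in Rplus) (phi (x + t)%R)%:E + (TV th t + TV th t).
Proof.
move=> t0 mphi phi01 phi0.
apply/lee_addgt0Pr => e e0.
pose N := (Num.truncn e^-1).+1.
have N0 : (0 < N)%N by [].
have Np : (0 < (N%:R : R))%R by rewrite ltr0n.
have Ne : (N%:R^-1 <= e)%R.
  rewrite -[leRHS]invrK lef_pV2 ?posrE ?invr_gt0 //.
  exact/ltW/truncnS_gt.
pose C (k : nat) := [set x | (k.+1%:R / N%:R <= phi x)%R].
pose C' (k : nat) := [set s | 0 <= s /\ C k (s + t)]%R.
have mC k : measurable (C k).
  have -> : C k = phi @^-1` `[(k.+1%:R / N%:R)%R, +oo[.
    by apply/seteqP; split => x /=; rewrite in_itv /= andbT.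
  rewrite -[X in measurable X]setTI; apply: mphi => //; exact: measurable_itv.
have CR k : C k `<=` Rplus.
  move=> x Cx; apply/not_notP => nx; move: Cx; rewrite /C /= phi0 //.
  by apply/negP; rewrite -ltNge divr_gt0 // ltr0n.
have mC' k : measurable (C' k).
  have -> : C' k = Rplus `&` (fun x : R => (x + t)%R) @^-1` C k by [].
  exact: measurableI mRplus (mpre_shift t (mC k)).
have C'R k : C' k `<=` Rplus by move=> x [].
pose p k := fine (th (C k)); pose q k := fine (th (C' k)).
pose tau := fine (TV th t).
have ep k : th (C k) = (p k)%:E by rewrite fineK // fin_num_measure.
have eq' k : th (C' k) = (q k)%:E by rewrite fineK // fin_num_measure.
have etau : TV th t = tau%:E by rewrite fineK // tv_fin.
pose F (k : nat) := if k == N then setT else C k.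
have mF k : measurable (F k) by rewrite /F; case: eqP => _ //.
have hA : \int[th]_(x in setT) (phi x)%:E <=
    ((N%:R^-1 + \sum_(k < N) N%:R^-1 * p k)%R)%:E.
  apply: le_trans (@int_mono _ _ th setT _ (fun x => (\sum_(k < N.+1) N%:R^-1 * \1_(F k) x)%R%:E) _ _) _.
  - by move=> x _; rewrite lee_fin; case/andP: (phi01 x).
  - move=> x _; rewrite lee_fin big_ord_recr /= /F eqxx indicT mulr1.
    under eq_bigr => k _ do rewrite (ltn_eqF (ltn_ord k)) indicE mem_setb.
    rewrite ind_count //; last 2 first.
      by case/andP: (phi01 x). by case/andP: (phi01 x).
    case/andP: (phi01 x) => a b.
    by have [_ h] := trunc_bounds _ _ N0 a; rewrite addrC.
  rewrite int_sum_ind // lee_fin.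
  rewrite big_ord_recr /= /F eqxx setIT probability_setT /= mulr1 addrC.
  apply: lerD => //; apply: ler_sum => k _.
  by rewrite (ltn_eqF (ltn_ord k)) setIT.
have hC : ((\sum_(k < N) N%:R^-1 * q k)%R)%:E <=
    \int[th]_(x in Rplus) (phi (x + t)%R)%:E.
  have -> : ((\sum_(k < N) N%:R^-1 * q k)%R)%:E =
      \int[th]_(x in Rplus) ((\sum_(k < N) N%:R^-1 * \1_(C' k) x)%R%:E).
    rewrite int_sum_ind //; last exact: mRplus.
    by congr (_%:E); apply: eq_bigr => k _; rewrite setIidl.
  apply: int_mono.
  - move=> x _; rewrite lee_fin; apply: sumr_ge0 => k _.
    by rewrite mulr_ge0 // invr_ge0 ltW.
  - move=> x x0; rewrite lee_fin.
    have hx k : (x \in C' k) = ((x + t)%R \in C k).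
      apply/idP/idP => [/set_mem [] _ ?|/set_mem ?]; apply/mem_set => //.
    under eq_bigr => k _ do rewrite indicE hx mem_setb.
    case/andP: (phi01 (x + t)%R) => a b.
    rewrite ind_count //.
    by have [h _] := trunc_bounds _ _ N0 a.
have hB : (\sum_(k < N) N%:R^-1 * p k <= \sum_(k < N) N%:R^-1 * q k + (tau + tau))%R.
  have pq k : (p k <= q k + (tau + tau))%R.
    have h : th (C k) <= th (C' k) + (TV th t + TV th t) := stepB th t (C k) t0 (mC k) (CR k).
    by move: h; rewrite ep eq' etau -!EFinD lee_fin.
  have : (\sum_(k < N) p k <= \sum_(k < N) (q k + (tau + tau)))%R.
    by apply: ler_sum => k _; exact: pq.
  rewrite big_split /= sumr_const card_ord => h.
  rewrite -!mulr_sumr.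
  have Ni : (0 <= (N%:R : R)^-1)%R by rewrite invr_ge0 ltW.
  have := ler_wpM2l Ni h.
  by rewrite mulrDr -[((tau + tau) *+ N)%R]mulr_natr mulrCA mulVf ?mulr1 // lt0r_neq0.
rewrite etau; apply: le_trans hA _.
apply: (@le_trans _ _ ((\sum_(k < N) N%:R^-1 * q k + (tau + tau) + N%:R^-1)%R%:E)).
  by rewrite lee_fin addrC lerD2r.
rewrite !EFinD; apply: leeD; last by rewrite lee_fin.
by apply: leeD.
Qed.

Import HBNNSimple.
Lemma shift_ineq (th : probability R R) (t : R) (h : R -> R) : (0 <= t)%R ->
  (forall x, 0 <= h x <= 1)%R ->
  \int[th]_(x in Rplus) (h x)%:E <=
  \int[th]_(x in Rplus) (h (x + t)%R)%:E + (TV th t + TV th t).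
Proof.
move=> t0 h01.
rewrite ge0_integralE; last by move=> x _; rewrite lee_fin; case/andP: (h01 x).
apply: ge_ereal_sup => _ [phi /= phile <-].
have phi0 x : (0 <= phi x)%R by exact: fun_ge0.
have phiP x : (phi x)%:E <= (if x \in Rplus then (h x)%:E else 0).
  by have := phile x; rewrite /patch.
have := integral_nnsfun th measurableT phi; rewrite patch_setT => <-.
apply: le_trans (core th t (fun x => phi x) t0 _ _ _) _.
- exact: measurable_funP.
- move=> x; rewrite phi0 /=; have := phiP x; case: ifP => _.
    by rewrite lee_fin => /le_trans; apply; case/andP: (h01 x).
  by rewrite lee_fin => /le_trans; apply.
- move=> x nx; apply/eqP; rewrite eq_le phi0 andbT.
  have := phiP x; rewrite memNset // lee_fin //.
apply: leeD => //; apply: int_mono.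
- by move=> x _; rewrite lee_fin.
- move=> x x0; have := phiP (x + t)%R; rewrite mem_set //.
  by rewrite /Rplus /=; apply: addr_ge0.
Qed.
End Aux.
Lemma Vshift0 (R : realType) (U : topologicalType) (d : nat)
  (g : 'rV[R]_d -> U -> R) (f : 'rV[R]_d -> U -> 'rV[R]_d)
  (th : probability R R) (y0 : 'rV[R]_d) :
  V_shift g f th 0 y0 = V_eval g f th y0.
Proof.
rewrite /V_shift /V_eval; congr ereal_inf; apply/seteqP; split.
  move=> r [u [y [cu [sy ->]]]]; exists u, y; do 2 split => //.
  by apply: eq_integral => s _; rewrite addr0.
move=> r [u [y [cu [sy ->]]]]; exists u, y; do 2 split => //.
by apply: eq_integral => s _; rewrite addr0.
Qed.

Theorem mainTheorem12 (R : realType) (d : nat) (U : pseudoMetricType R)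
  (hU : hausdorff_space U)
  (g : 'rV[R]_d -> U -> R) (f : 'rV[R]_d -> U -> 'rV[R]_d) (L a : R)
  (hg01 : forall y u, 0 <= g y u <= 1)
  (hgm : borel_measurable (fun p : 'rV[R]_d * U => g p.1 p.2))
  (hfm : borel_measurable (fun p : 'rV[R]_d * U => f p.1 p.2))
  (hL : 0 <= L) (ha : 0 < a)
  (hLip : forall y y' u, `|f y u - f y' u| <= L * `|y - y'|)
  (hgrowth : forall y u, `|f y u| <= a * (1 + `|y|))
  (theta : nat -> probability R R)
  (hsupp : forall k, theta k (~` Rplus) = 0%E)
  (hlt : long_term theta) :
  forall (T0 : R) (y0 : 'rV[R]_d), 0 <= T0 ->
    limn_esup (fun k => V_eval g f (theta k) y0)
      = limn_esup (fun k => ereal_inf [set V_shift g f (theta k) t y0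
                                        | t in [set t : R | (0 <= t <= T0)%R]])
    /\
    (limn_esup (fun k => V_eval g f (theta k) y0)
      <= ereal_sup [set ereal_inf [set V_shift g f (theta k) t y0
                                        | t in [set t : R | (0 <= t <= T0)%R]]
                    | k in [set: nat]])%E.
Proof.
move=> T0 y0 T00.
set V := fun k => V_eval g f (theta k) y0.
set W := fun k => ereal_inf [set V_shift g f (theta k) t y0
                                        | t in [set t : R | (0 <= t <= T0)%R]].
pose S := (T0 + 1)%R.
have S0 : 0 < S by rewrite /S; lra.
pose M := fun k => ereal_sup [set TV (theta k) s | s in [set s : R | (0 <= s <= S)%R]].
Local Open Scope ereal_scope.
have M0 k : 0 <= M k.
  apply: le_trans (tv_ge0 (theta k) 0) _; apply: ereal_sup_ubound; exists 0%R => //=.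
  by rewrite lexx ltW.
have M1 k : M k <= 1 by apply: ge_ereal_sup => _ [s _ <-]; exact: tv_le1.
have Mfin k : M k \is a fin_num.
  by rewrite ge0_fin_numE // (le_lt_trans (M1 k)) // ltey.
have TVM k t : (0 <= t <= T0)%R -> TV (theta k) t <= M k.
  move=> /andP[t0 tT]; apply: ereal_sup_ubound; exists t => //=.
  by rewrite t0 /S; apply: ler_wpDr.
have VW k : V k <= W k + (M k + M k).
  have cfin : (M k + M k) \is a fin_num by rewrite fin_numD !Mfin.
  rewrite -leeBlDr //; apply: le_ereal_inf_tmp => _ [t /andP[t0 tT] <-].
  rewrite leeBlDr //.
  apply: (@le_trans _ _ (V_shift g f (theta k) t y0 + (TV (theta k) t + TV (theta k) t))).
    have tfin : (TV (theta k) t + TV (theta k) t) \is a fin_num.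
      by rewrite fin_numD !tv_fin.
    rewrite -leeBlDr //; apply: le_ereal_inf_tmp => _ [u [y [cu [sy ->]]]].
    rewrite leeBlDr //.
    apply: le_trans (shift_ineq (theta k) t (fun s => g (y s) (u s)) t0 _).
      by apply: ereal_inf_lbound; exists u, y; do 2 split => //.
    by move=> x; exact: hg01.
  by apply: leeD => //; apply: leeD; apply: TVM; rewrite t0.
have WV k : W k <= V k.
  apply: ereal_inf_lbound; exists 0%R; first by rewrite /= lexx.
  exact: Vshift0.
pose c := fun k => M k + M k.
have cM : c @ \oo --> 0.
  rewrite -(adde0 0); apply: cvgeD => //; exact: hlt.
have key : limn_esup V <= limn_esup W.
  rewrite !limn_esup_lim.
  have cW := @is_cvg_esups _ W.
  have ce : esups c @ \oo --> 0 := cvg_esups cM.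
  have h : (fun n => esups W n + esups c n) @ \oo --> limn (esups W) + 0.
    by apply: cvgeD => //; rewrite fin_num_adde_defl.
  apply: (@le_trans _ _ (limn (fun n => esups W n + esups c n))).
    apply: lee_lim; [exact: is_cvg_esups| by apply/cvg_ex; eexists; exact: h|].
    apply: nearW => n; apply: ge_ereal_sup => _ [m nm <-].
    apply: le_trans (VW m) _; apply: leeD; apply: ereal_sup_ubound; exists m => //.
  by rewrite (cvg_lim _ h) // adde0.
have key2 : limn_esup W <= limn_esup V.
  rewrite !limn_esup_lim; apply: lee_lim; [exact: is_cvg_esups|exact: is_cvg_esups|].
  apply: nearW => n; apply: ge_ereal_sup => _ [m nm <-].
  apply: le_trans (WV m) _; apply: ereal_sup_ubound; exists m => //.
have E : limn_esup V = limn_esup W by apply/eqP; rewrite eq_le key key2.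
split => //.
rewrite E limn_esup_lim.
have h1 : limn (esups W) <= esups W 0%N.
  apply: lime_le; first exact: is_cvg_esups.
  apply: nearW => n; have := @nonincreasing_esups _ W 0%N n (leq0n n); exact.
apply: le_trans h1 _.
by apply: ereal_sup_le => _ [k _ <-]; exists k.
Qed.
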